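(* Let $n\in\mathbb{N}$ with $n\geq 2$. Then (i) $|\mu_{n}(1212)|=\sum_{k=0}^{n-2}\left((2k+1)C_{k}C_{n-k-2}+C_{k}|\mu_{n-k-1}(1212)|\right)$; (ii) as formal power series, $\mu(1212,z)=\dfrac{z(C(z)-1)}{(1-2zC(z))(1-zC(z))}$; (iii) $|\mu_{n}(1212)|=\binom{2n-1}{n-2}$.
   Context: A matching of order $n$ is a partition of $[2n]$ into blocks (edges) of size two, identified with the word in $[n]^{2n}$ where both vertices of an edge carry the same letter and letters appear in increasing order of left vertices; $1212$ is the matching $\{\{1,3\},\{2,4\}\}$. A matching $\sigma$ of order $k$ is a pattern of $\tau$ if there are $i_1<\dots<i_{2k}$ with $\{i_p,i_q\}\in\tau$ iff $\{p,q\}\in\sigma$. The rightmost edge of a matching is the edge with the largest right vertex. A matching $\lambda$ minimally contains $\sigma$ if it contains $\sigma$ and deleting its rightmost edge yields a matching not containing $\sigma$; $\mu_n(\sigma)$ is the set of such matchings of order $n$ and $\mu(\sigma,z)=\sum_{n\ge0}|\mu_n(\sigma)|z^n$. $C_n=\frac{1}{n+1}\binom{2n}{n}$ is the $n$-th Catalan number and $C(z)=\sum_{n\ge0}C_nz^n$. *)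

(* Defs.v *)
From mathcomp Require Import all_boot all_order all_algebra.
Set Implicit Arguments. Unset Strict Implicit. Unset Printing Implicit Defensive.
Import GRing.Theory Num.Theory.

Definition is_matching (n : nat) (m : {ffun 'I_(n.*2) -> 'I_(n.*2)}) : bool :=
  [forall i, (m i != i) && (m (m i) == i)].

Definition contains (n k : nat) (tau : {ffun 'I_(n.*2) -> 'I_(n.*2)})
    (sigma : {ffun 'I_(k.*2) -> 'I_(k.*2)}) : bool :=
  [exists g : {ffun 'I_(k.*2) -> 'I_(n.*2)},
     [forall p : 'I_(k.*2), forall q : 'I_(k.*2),
        ((p < q)%N ==> (g p < g q)%N) && ((tau (g p) == g q) == (sigma p == q))]].

(* The rightmost edge is the
   edge containing the last position ord_max (= 2n+1), which is necessarily a
   right vertex; its partner is j = tau ord_max. *)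
Definition del_rightmost (n : nat) (tau : {ffun 'I_(n.+1.*2) -> 'I_(n.+1.*2)})
  : {ffun 'I_(n.*2) -> 'I_(n.*2)} :=
  let j : nat := tau ord_max in
  [ffun i : 'I_(n.*2) =>
     insubd i (unbump j (tau (inord (bump j i) : 'I_(n.+1.*2))))].

(* |mu_n(sigma)| : number of matchings of order n minimally containing sigma.
   For n = 0 there is no rightmost edge, so mu_0(sigma) is empty. *)
Definition mu_card (k : nat) (sigma : {ffun 'I_(k.*2) -> 'I_(k.*2)}) (n : nat)
  : nat :=
  match n with
  | 0 => 0
  | n'.+1 => #|[set lam : {ffun 'I_(n'.+1.*2) -> 'I_(n'.+1.*2)} |
                 [&& is_matching lam, contains lam sigma &
                     ~~ contains (del_rightmost lam) sigma]]|
  end.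

(* The matching 1212 = {{1,3},{2,4}}; with 0-based positions: 0<->2, 1<->3. *)
Definition m1212 : {ffun 'I_(2.*2) -> 'I_(2.*2)} :=
  [ffun i : 'I_4 => inord ((i + 2) %% 4)].

Definition catalan (n : nat) : nat := 'C(n.*2, n) %/ n.+1.

Definition fps := nat -> rat.
Local Open Scope ring_scope.
Definition fps_const (c : rat) : fps := fun n => if n is 0%N then c else 0.
Definition fps_X : fps := fun n => if n == 1%N then 1 else 0.
Definition fps_add (a b : fps) : fps := fun n => a n + b n.
Definition fps_sub (a b : fps) : fps := fun n => a n - b n.
Definition fps_scale (c : rat) (a : fps) : fps := fun n => c * a n.
Definition fps_mul (a b : fps) : fps :=
  fun n => \sum_(i < n.+1) a i * b (n - i)%N.
Fixpoint fps_inv_list (a : fps) (n : nat) : seq rat :=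
  match n with
  | 0 => [:: (a 0%N)^-1]
  | n'.+1 => let l := fps_inv_list a n' in
             rcons l (- (a 0%N)^-1 *
                      \sum_(i < n'.+1) a i.+1 * nth 0 l (n' - i)%N)
  end.
Definition fps_inv (a : fps) : fps := fun n => nth 0 (fps_inv_list a n) n.

Definition catalan_gf : fps := fun n => (catalan n)%:R.
Definition mu_gf (k : nat) (sigma : {ffun 'I_(k.*2) -> 'I_(k.*2)}) : fps :=
  fun n => (mu_card sigma n)%:R.

(* Main.v *)
Require Import Defs.
From mathcomp Require Import all_boot all_order all_algebra zify ring lra.
Set Implicit Arguments. Unset Strict Implicit. Unset Printing Implicit Defensive.

Lemma bumpE h i : bump h i = if h <= i then i.+1 else i.
Proof. by rewrite /bump; case: leqP => _; rewrite ?add1n ?add0n. Qed.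
Lemma unbumpE h i : unbump h i = if h < i then i.-1 else i.
Proof. by rewrite /unbump; case: ltnP => _; rewrite ?subn1 ?subn0. Qed.

Ltac bsimpl := rewrite ?bumpE ?unbumpE; repeat (case: ifP; intro); intros; lia.

Lemma bump_ltn h a b : (bump h a < bump h b) = (a < b).
Proof. rewrite !bumpE; case: (leqP h a); case: (leqP h b); lia. Qed.

Definition matchN N (m : {ffun 'I_N -> 'I_N}) : bool :=
  [forall i, (m i != i) && (m (m i) == i)].

Definition delN N (tau : {ffun 'I_N.+2 -> 'I_N.+2}) : {ffun 'I_N -> 'I_N} :=
  let j : nat := tau ord_max in
  [ffun i : 'I_N =>
     insubd i (unbump j (tau (inord (bump j i) : 'I_N.+2)))].

Definition containsN N K (tau : {ffun 'I_N -> 'I_N})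
    (sigma : {ffun 'I_K -> 'I_K}) : bool :=
  [exists g : {ffun 'I_K -> 'I_N},
     [forall p : 'I_K, forall q : 'I_K,
        ((p < q)%N ==> (g p < g q)%N) && ((tau (g p) == g q) == (sigma p == q))]].

Lemma conv_test n (lam : {ffun 'I_(n.+1.*2) -> 'I_(n.+1.*2)}) :
  [&& is_matching lam, contains lam m1212 & ~~ contains (del_rightmost lam) m1212]
  = [&& @matchN (n.*2).+2 lam, containsN (lam : {ffun 'I_(n.*2).+2 -> 'I_(n.*2).+2}) m1212 & ~~ containsN (delN lam) m1212].
Proof. reflexivity. Qed.

Lemma m1212E (p : 'I_4) : val (m1212 p) = (p + 2) %% 4.
Proof. by rewrite ffunE; apply: inordK; rewrite ltn_mod. Qed.

Definition crossN N (m : {ffun 'I_N -> 'I_N}) : bool :=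
  [exists a : 'I_N, exists b : 'I_N, (a < b) && (b < m a) && (m a < m b)].

Lemma m1212_eq (p q : 'I_4) : (m1212 p == q) = ((p + 2) %% 4 == q).
Proof. by rewrite -(inj_eq val_inj) /= m1212E. Qed.

Lemma matchNP N (m : {ffun 'I_N -> 'I_N}) : matchN m ->
  (forall i, m (m i) = i) /\ (forall i, m i != i).
Proof.
move=> /forallP H; split=> i; have /andP[H1 /eqP H2] := H i => //.
Qed.

Lemma containsE N (m : {ffun 'I_N -> 'I_N}) : matchN m ->
  containsN m m1212 = crossN m.
Proof.
move=> /matchNP [inv fpf].
apply/idP/idP.
- move=> /existsP [g /forallP H].
  pose o0 := @Ordinal 4 0 isT; pose o1 := @Ordinal 4 1 isT.
  pose o2 := @Ordinal 4 2 isT; pose o3 := @Ordinal 4 3 isT.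
  have Hm : forall p q : 'I_4, (m (g p) == g q) = ((p + 2) %% 4 == q).
    by move=> p q; have /forallP/(_ q)/andP[_ /eqP] := H p; rewrite m1212_eq.
  have Hl : forall p q : 'I_4, p < q -> g p < g q.
    by move=> p q pq; have /forallP/(_ q)/andP[/implyP/(_ pq) ? _] := H p.
  have E02 : m (g o0) = g o2 by apply/eqP; rewrite Hm.
  have E13 : m (g o1) = g o3 by apply/eqP; rewrite Hm.
  apply/existsP; exists (g o0); apply/existsP; exists (g o1).
  by rewrite E02 E13 !Hl.
- move=> /existsP [a /existsP [b /andP [/andP [ab bma] mab]]].
  pose g := [ffun p : 'I_4 => nth a [:: a; b; m a; m b] p].
  have gE : forall p : 'I_4, g p = nth a [:: a; b; m a; m b] p by move=> p; rewrite ffunE.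
  have Hl : forall p q : 'I_4, p < q -> g p < g q.
    move=> [[|[|[|[|p]]]] Hp] // [[|[|[|[|q]]]] Hq] // _; rewrite !gE /=; lia.
  have ginj : injective g.
    move=> p q E; apply/eqP; case: (ltngtP p q) => // pq.
    - by have := Hl _ _ pq; rewrite E ltnn.
    - by have := Hl _ _ pq; rewrite E ltnn.
    - by apply/eqP; apply: val_inj.
  have Hm : forall p, m (g p) = g (m1212 p).
    move=> p; rewrite !gE ffunE inordK ?ltn_mod //.
    by case: p => [[|[|[|[|p]]]] Hp] //=; rewrite inv.
  apply/existsP; exists g; apply/forallP=> p; apply/forallP=> q.
  by rewrite Hm (inj_eq ginj); apply/andP; split=> //; apply/implyP; apply: Hl.
Qed.

Lemma ord_eqE N (a b : 'I_N) : (a == b) = (nat_of_ord a == nat_of_ord b).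
Proof. by []. Qed.

Definition fN N (M : {ffun 'I_N -> 'I_N}) (k : nat) : nat :=
  odflt 0%N (omap (fun o : 'I_N => nat_of_ord (M o)) (insub k)).

Lemma fNE N (M : {ffun 'I_N -> 'I_N}) (k : 'I_N) : fN M k = M k.
Proof. by rewrite /fN valK. Qed.

Definition insN N (M : {ffun 'I_N -> 'I_N}) (j : 'I_N.+1) : {ffun 'I_N.+2 -> 'I_N.+2} :=
  [ffun i : 'I_N.+2 => inord (if i == ord_max then nat_of_ord j
                              else if nat_of_ord i == nat_of_ord j then N.+1
                              else bump j (fN M (unbump j i)))].

Lemma posP N (j : 'I_N.+1) (i : 'I_N.+2) :
  [\/ i = ord_max, nat_of_ord i = nat_of_ord j | exists k : 'I_N, nat_of_ord i = bump j k].
Proof.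
case: (eqVneq i ord_max) => [->|im]; first by constructor 1.
case: (eqVneq (nat_of_ord i) (nat_of_ord j)) => [->|ij]; first by constructor 2.
constructor 3.
have iN : nat_of_ord i < N.+1.
  have := ltn_ord i; move: im; rewrite ord_eqE /=; lia.
have jN := ltn_ord j.
have ltk : unbump j i < N.
  move: ij; rewrite unbumpE; case: (ltnP j i)=> H1 H2; move/eqP: H2 => H2; lia.
exists (Ordinal ltk) => /=; rewrite unbumpK //; exact/eqP.
Qed.

Section Ins.
Variables (N : nat) (M : {ffun 'I_N -> 'I_N}) (j : 'I_N.+1).

Lemma insN_max : nat_of_ord (insN M j ord_max) = j.
Proof. by rewrite ffunE eqxx inordK // ltnS ltnW // ltn_ord. Qed.

Lemma insN_j (i : 'I_N.+2) : nat_of_ord i = j -> nat_of_ord (insN M j i) = N.+1.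
Proof.
move=> ij; rewrite ffunE ij eqxx.
have -> : (i == ord_max) = false.
  apply/negbTE; rewrite ord_eqE /= ij; have := ltn_ord j; lia.
by rewrite inordK.
Qed.

Lemma insN_bump (k : 'I_N) (i : 'I_N.+2) : nat_of_ord i = bump j k ->
  nat_of_ord (insN M j i) = bump j (M k).
Proof.
move=> ik; rewrite ffunE ik.
have kN := ltn_ord k; have jN := ltn_ord j.
have -> : (i == ord_max) = false.
  apply/negbTE; rewrite ord_eqE /= ik; move: kN jN; bsimpl.
rewrite eq_sym (negbTE (neq_bump _ _)) bumpK fNE inordK //.
have := ltn_ord (M k); move: jN; bsimpl.
Qed.

End Ins.

Lemma ord_eqP N (a b : 'I_N) : (a = b) <-> (nat_of_ord a = nat_of_ord b).
Proof. by split=> [->//|]; apply: val_inj. Qed.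

Lemma insN_match N (M : {ffun 'I_N -> 'I_N}) (j : 'I_N.+1) :
  matchN M -> matchN (insN M j).
Proof.
move=> /matchNP [inv fpf]; apply/forallP=> i; apply/andP; split.
- rewrite ord_eqE.
  case: (posP j i) => [->|ij|[k ik]].
  + by rewrite insN_max /=; have := ltn_ord j; lia.
  + by rewrite insN_j // ij; have := ltn_ord j; lia.
  + rewrite (insN_bump _ ik) ik; apply/negP=> /eqP /(can_inj (bumpK j)) /val_inj E.
    by move/eqP: (fpf k).
- apply/eqP; apply/ord_eqP.
  case: (posP j i) => [->|ij|[k ik]].
  + by rewrite (@insN_j _ M j (insN M j ord_max)) ?insN_max.
  + have -> : insN M j i = ord_max by apply/ord_eqP; rewrite insN_j.
    by rewrite insN_max ij.
  + by rewrite (@insN_bump _ M j (M k) (insN M j i)) ?inv ?ik // (insN_bump _ ik).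
Qed.

Lemma insN_match_inv N (M : {ffun 'I_N -> 'I_N}) (j : 'I_N.+1) :
  matchN (insN M j) -> matchN M.
Proof.
move=> /matchNP [inv fpf]; apply/forallP=> k.
have bN : forall k : 'I_N, bump j k < N.+2.
  by move=> k'; have := ltn_ord k'; have := ltn_ord j; bsimpl.
have E : forall k : 'I_N, nat_of_ord (insN M j (inord (bump j k))) = bump j (M k).
  by move=> k'; apply: insN_bump; rewrite inordK.
apply/andP; split.
- rewrite ord_eqE /=; apply/negP=> /eqP MK.
  move/eqP: (fpf (inord (bump j k))); apply; apply/ord_eqP; rewrite E MK inordK //.
- apply/eqP; apply/ord_eqP.
  have := inv (inord (bump j k)).
  have -> : insN M j (inord (bump j k)) = inord (bump j (M k)).
    by apply/ord_eqP; rewrite E inordK.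
  move/ord_eqP; rewrite E !inordK //; exact: (can_inj (bumpK j)).
Qed.

Lemma delN_insN N (M : {ffun 'I_N -> 'I_N}) (j : 'I_N.+1) : delN (insN M j) = M.
Proof.
apply/ffunP=> i; apply/ord_eqP; rewrite ffunE insN_max.
rewrite (@insN_bump _ M j i); last first.
  by rewrite inordK //; have := ltn_ord i; have := ltn_ord j; bsimpl.
by rewrite bumpK val_insubd ltn_ord.
Qed.

Lemma ins_del N (lam : {ffun 'I_N.+2 -> 'I_N.+2}) : matchN lam ->
  lam = insN (delN lam) (inord (lam ord_max)).
Proof.
move=> /matchNP [inv fpf].
set j := nat_of_ord (lam ord_max).
have jN : j < N.+1.
  have := ltn_ord (lam ord_max); move: (fpf ord_max); rewrite ord_eqE /= -/j; lia.
have j0E : nat_of_ord (inord j : 'I_N.+1) = j by rewrite inordK.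
apply/ffunP=> i; apply/ord_eqP.
case: (posP (inord j) i) => [->|ij|[k ik]].
- by rewrite insN_max j0E.
- rewrite insN_j //.
  have -> : i = lam ord_max by apply/ord_eqP; rewrite ij j0E.
  by rewrite inv.
- rewrite (insN_bump _ ik) j0E ffunE -/j.
  rewrite j0E in ik.
  have -> : (inord (bump j k) : 'I_N.+2) = i by apply/ord_eqP; rewrite inordK -ik //; have := ltn_ord i.
  have lij : nat_of_ord (lam i) != j.
    apply/negP => /eqP E.
    have E' : lam i = lam ord_max by apply/ord_eqP.
    have := f_equal lam E'; rewrite !inv => /ord_eqP /=; rewrite ik.
    have := ltn_ord k; move: jN; bsimpl.
  have liN : nat_of_ord (lam i) != N.+1.
    apply/negP => /eqP E.
    have E' : lam i = ord_max by apply/ord_eqP.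
    have := f_equal lam E'; rewrite !inv => /ord_eqP; rewrite -/j ik => E2.
    by move: (neq_bump j k); rewrite E2 eqxx.
  have ltN : unbump j (lam i) < N.
    have := ltn_ord (lam i); move: lij liN jN; bsimpl.
  by rewrite val_insubd ltN unbumpK.
Qed.

Lemma delN_match N (lam : {ffun 'I_N.+2 -> 'I_N.+2}) : matchN lam -> matchN (delN lam).
Proof.
move=> H; apply: (@insN_match_inv _ _ (inord (lam ord_max))).
by rewrite -ins_del.
Qed.

Lemma count_ins N (Q : pred {ffun 'I_N.+2 -> 'I_N.+2}) :
  #|[set lam | matchN lam && Q lam]| =
  \sum_(M | matchN M) #|[set j : 'I_N.+1 | Q (insN M j)]|.
Proof.
set S := [set x : {ffun 'I_N -> 'I_N} * 'I_N.+1 | matchN x.1 && Q (insN x.1 x.2)].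
have inj : injective (fun x : {ffun 'I_N -> 'I_N} * 'I_N.+1 => insN x.1 x.2).
  move=> [M1 j1] [M2 j2] /= E.
  have := f_equal (@delN N) E; rewrite !delN_insN => ->.
  have := f_equal (fun l : {ffun 'I_N.+2 -> 'I_N.+2} => nat_of_ord (l ord_max)) E.
  by rewrite /= !insN_max => /val_inj ->.
have -> : [set lam | matchN lam && Q lam] =
          [set insN x.1 x.2 | x in S].
  apply/setP => lam; rewrite inE; apply/andP/imsetP.
  - case=> ml ql; exists (delN lam, inord (lam ord_max)).
      by rewrite inE /= -ins_del // ql delN_match.
    by rewrite /= -ins_del.
  - case=> [[M j]]; rewrite inE /= => /andP[mM qM] ->; split => //.
    exact: insN_match.
rewrite card_imset // -sum1_card.
rewrite (eq_bigl (fun x => matchN x.1 && Q (insN x.1 x.2))); last by move=> x; rewrite inE.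
rewrite -(pair_big_dep (fun M => matchN M) (fun M j => Q (insN M j)) (fun _ _ => 1)) /=.
apply: eq_bigr => M _; rewrite -sum1_card; apply: eq_bigl => j; by rewrite inE.
Qed.

Definition covN N (M : {ffun 'I_N -> 'I_N}) (g : nat) : bool :=
  [exists a : 'I_N, (a < g) && (g <= M a)].

Lemma cross_ins N (M : {ffun 'I_N -> 'I_N}) (j : 'I_N.+1) :
  crossN (insN M j) = crossN M || covN M j.
Proof.
have jN := ltn_ord j.
have bN : forall k : 'I_N, bump j k < N.+2.
  by move=> k'; have := ltn_ord k'; bsimpl.
have E : forall k : 'I_N, nat_of_ord (insN M j (inord (bump j k))) = bump j (M k).
  by move=> k'; apply: insN_bump; rewrite inordK.
apply/idP/idP.
- move=> /existsP [p /existsP [q /andP [/andP [pq qlp] lplq]]].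
  have Lle : forall x, nat_of_ord (insN M j x) <= N.+1 by move=> x; have := ltn_ord (insN M j x).
  case: (posP j p) => [pm|pj|[a pa]].
  + by move: pq; rewrite pm /=; have := ltn_ord q; lia.
  + by move: lplq; rewrite insN_j //; have := Lle q; lia.
  case: (posP j q) => [qm|qj|[b qb]].
  + by move: qlp; rewrite qm /=; have := Lle p; lia.
  + apply/orP; right; apply/existsP; exists a.
    move: pq qlp; rewrite (insN_bump _ pa) pa qj.
    have := ltn_ord (M a); have := ltn_ord a; bsimpl.
  + apply/orP; left; apply/existsP; exists a; apply/existsP; exists b.
    move: pq qlp lplq; rewrite (insN_bump _ pa) (insN_bump _ qb) pa qb !bump_ltn.
    by move=> -> -> ->.
- case/orP.
  + move=> /existsP [a /existsP [b /andP [/andP [ab bma] mab]]].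
    apply/existsP; exists (inord (bump j a)); apply/existsP; exists (inord (bump j b)).
    by rewrite !E !inordK // !bump_ltn ab bma mab.
  + move=> /existsP [a /andP [aj jma]].
    have pa : nat_of_ord (inord a : 'I_N.+2) = bump j a.
      rewrite inordK; last by have := ltn_ord a; lia.
      by move: aj; bsimpl.
    have qj : nat_of_ord (inord j : 'I_N.+2) = j by rewrite inordK //; lia.
    apply/existsP; exists (inord a); apply/existsP; exists (inord j).
    rewrite (insN_bump _ pa) (@insN_j _ M j _ qj) pa qj.
    have := ltn_ord (M a); move: aj jma; bsimpl.
Qed.

Definition zc N (M : {ffun 'I_N -> 'I_N}) : nat := \sum_(g < N.+1) ~~ covN M g.
Definition cnt N (M : {ffun 'I_N -> 'I_N}) (j : nat) : nat := \sum_(g < j.+1) ~~ covN M g.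

Section Cov.
Variables (N : nat) (M : {ffun 'I_N -> 'I_N}) (j : 'I_N.+1).

Lemma cov_ins_le g : g <= j -> covN (insN M j) g = covN M g.
Proof.
move=> gj; have jN := ltn_ord j.
apply/idP/idP.
- move=> /existsP [p /andP [pg gLp]].
  case: (posP j p) => [pm|pj|[a pa]].
  + by move: pg; rewrite pm /=; lia.
  + by move: pg; rewrite pj; lia.
  + apply/existsP; exists a; move: pg gLp; rewrite (insN_bump _ pa) pa.
    move: gj; have := ltn_ord a; bsimpl.
- move=> /existsP [a /andP [ag gMa]].
  have pa : nat_of_ord (inord a : 'I_N.+2) = bump j a.
    rewrite inordK; last by have := ltn_ord a; lia.
    by move: ag gj; bsimpl.
  apply/existsP; exists (inord a); rewrite (insN_bump _ pa) pa.
  move: ag gj gMa; bsimpl.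
Qed.

Lemma cov_ins_mid g : j < g <= N.+1 -> covN (insN M j) g.
Proof.
move=> /andP [jg gN]; have jN := ltn_ord j.
have qj : nat_of_ord (inord j : 'I_N.+2) = j by rewrite inordK //; lia.
apply/existsP; exists (inord j); rewrite (@insN_j _ M j _ qj) qj; lia.
Qed.

Lemma cov_ins_last : ~~ covN (insN M j) N.+2.
Proof.
apply/existsP => [[p /andP [_ H]]]; have := ltn_ord (insN M j p); lia.
Qed.

Lemma zc_ins : zc (insN M j) = (cnt M j).+1.
Proof.
have jN := ltn_ord j.
rewrite /zc /cnt -!(big_mkord xpredT (fun g => nat_of_bool (~~ covN _ g))).
rewrite (@big_cat_nat _ _ _ j.+1) //=; last by lia.
rewrite [X in _ + X = _]big_nat_recr /=; last by lia.
have -> : \sum_(j.+1 <= i < N.+2) ~~ covN (insN M j) i = 0.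
  rewrite big_nat_cond big1 // => g /andP[/andP[H1 H2] _]; rewrite cov_ins_mid //; lia.
rewrite cov_ins_last /= ?addn0 -[RHS]addn1; congr (_ + _); apply: eq_big_nat => g /andP [_ gj].
by rewrite cov_ins_le.
Qed.
End Cov.

Lemma count_sel (p : nat -> bool) L s :
  \sum_(j < L) (p j && (s <= \sum_(g < j.+1) p g)) = \sum_(g < L) p g - s.-1.
Proof.
elim: L => [|L IH]; first by rewrite !big_ord0.
rewrite big_ord_recr /= IH [X in _ = X - _]big_ord_recr /=.
rewrite big_ord_recr /=.
set X := \sum_(i < L) p i.
case: (p L) => /=; rewrite ?addn0 ?addn1 //.
case: (leqP s X.+1) => H /=; lia.
Qed.

Lemma card_sum (T : finType) (b : pred T) : #|[set x | b x]| = \sum_x (b x : nat).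
Proof.
rewrite -sum1_card big_mkcond /=; apply: eq_bigr => x _; rewrite inE; by case: (b x).
Qed.

Lemma sum_bool (T : finType) (P b : pred T) :
  \sum_(x | P x) (b x : nat) = #|[set x | P x && b x]|.
Proof.
rewrite card_sum big_mkcond /=; apply: eq_bigr => x _; by case: (P x).
Qed.

Lemma zc_le N (M : {ffun 'I_N -> 'I_N}) : zc M <= N.+1.
Proof.
rewrite /zc; apply: (@leq_trans (\sum_(g < N.+1) 1)).
  by apply: leq_sum => i _; exact: leq_b1.
by rewrite sum_nat_const card_ord muln1.
Qed.

Lemma sum_range_le z a b : \sum_(a <= t < b) (t <= z) = minn z.+1 b - a.
Proof.
elim: b => [|b IH]; first by rewrite big_geq //; lia.
case: (leqP a b) => ab.
  by rewrite big_nat_recr //= IH; case: (leqP b z) => bz /=; lia.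
by rewrite big_geq //; lia.
Qed.

Definition Gs N t := \sum_(M : {ffun 'I_N -> 'I_N} | matchN M && ~~ crossN M) (t <= zc M).

Lemma G_rec N s : Gs N.+2 s.+1 = \sum_(maxn s 1 <= t < N.+2) Gs N t.
Proof.
rewrite /Gs sum_bool.
have -> : [set x : {ffun 'I_N.+2 -> 'I_N.+2} | (matchN x && ~~ crossN x) && (s.+1 <= zc x)]
        = [set x | matchN x && (~~ crossN x && (s.+1 <= zc x))].
  by apply/setP => x; rewrite !inE andbA.
rewrite count_ins.
under eq_bigr => M _ do rewrite card_sum.
rewrite (bigID (fun M => crossN M)) /= big1 ?add0n; last first.
  move=> M /andP [_ cM]; apply: big1 => j _; by rewrite cross_ins cM.
rewrite [RHS]exchange_big /=.
apply: eq_bigr => M /andP [mM cM].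
have -> : \sum_(j < N.+1) (~~ crossN (insN M j) && (s.+1 <= zc (insN M j)) : nat)
        = \sum_(j < N.+1) (~~ covN M j && (s <= \sum_(g < j.+1) ~~ covN M g)).
  apply: eq_bigr => j _; by rewrite cross_ins zc_ins (negbTE cM).
rewrite (count_sel (fun g => ~~ covN M g)) -/(zc M) sum_range_le.
have := zc_le M; lia.
Qed.

Lemma G0 N : Gs N 0 = Gs N 1.
Proof.
apply: eq_bigr => M _; rewrite /zc big_ord_recr /=.
have -> : covN M N = false.
  by apply/negbTE/existsP => [[a /andP [_ H]]]; move: H; rewrite leqNgt ltn_ord.
by rewrite addn1.
Qed.

Lemma G_base s : Gs 0 s = (s <= 1).
Proof.
have E : forall M : {ffun 'I_0 -> 'I_0}, M = [ffun i => i] by move=> M; apply/ffunP => [[]].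
have m0 : matchN [ffun i : 'I_0 => i] by apply/forallP => [[]].
have c0 : crossN [ffun i : 'I_0 => i] = false by apply/negbTE/existsP => [[[]]].
have z0 : zc [ffun i : 'I_0 => i] = 1.
  rewrite /zc big_ord_recr big_ord0 /=.
  by have -> : covN [ffun i : 'I_0 => i] 0 = false by apply/negbTE/existsP => [[[]]].
rewrite /Gs (eq_bigl xpredT); last by move=> M; rewrite (E M) m0 c0.
rewrite (eq_bigr (fun _ => (s <= 1 : nat))); last by move=> M _; rewrite (E M) z0.
by rewrite sum_nat_const card_ffun !card_ord expn0 mul1n.
Qed.

Lemma mu_rec n : mu_card m1212 n.+1 + Gs (n.*2).+2 0 = (n.*2).+1 * Gs (n.*2) 0.
Proof.
set N := n.*2.
have -> : mu_card m1212 n.+1 =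
   #|[set lam : {ffun 'I_N.+2 -> 'I_N.+2} | matchN lam && (crossN lam && ~~ crossN (delN lam))]|.
  rewrite /mu_card; apply: eq_card => lam; rewrite !inE.
  change ([&& matchN lam, containsN lam m1212 & ~~ containsN (delN lam) m1212] =
     matchN lam && (crossN lam && ~~ crossN (delN lam))).
  case mL: (matchN lam) => //=.
  by rewrite !containsE // delN_match.
have -> : Gs N.+2 0 = #|[set lam : {ffun 'I_N.+2 -> 'I_N.+2} | matchN lam && ~~ crossN lam]|.
  rewrite /Gs sum_bool; apply: eq_card => lam; by rewrite !inE andbT.
rewrite !count_ins -big_split /= /Gs big_distrr /= big_mkcondr /=.
apply: eq_bigr => M mM.
rewrite !card_sum -big_split /=.
under eq_bigr => j _ do rewrite cross_ins delN_insN.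
case cM: (crossN M) => /=.
  by rewrite big1.
rewrite (eq_bigr (fun _ => 1)); last by move=> j _; case: (covN M j).
by rewrite sum_nat_const card_ord muln1.
Qed.
Fixpoint B (m : nat) : nat -> nat :=
  match m with
  | 0 => fun _ => 1
  | m'.+1 => fix Bs (s : nat) := match s with 0 => 0 | s'.+1 => Bs s' + B m' s'.+2 end
  end.

Lemma B0s s : B 0 s = 1. Proof. by []. Qed.
Lemma BS0 m : B m.+1 0 = 0. Proof. by []. Qed.
Lemma BSS m s : B m.+1 s.+1 = B m.+1 s + B m s.+2. Proof. by []. Qed.
Arguments B : simpl never.

Lemma B_sum m s : \sum_(j < m.+1) B (m - j) (s + j) = B m s.+1.
Proof.
elim: m s => [|m IH] s; first by rewrite big_ord_recl big_ord0.
rewrite big_ord_recl subn0 addn0 BSS -IH; congr (_ + _).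
have b0 : forall i, bump 0 i = i.+1 by move=> i; rewrite /bump leq0n.
by apply: eq_bigr => j _; rewrite lift0 subSS addSnnS.
Qed.

Lemma B_closed m s : B m.+1 s + 'C(m + m + s + 1, m) = 'C(m + m + s + 1, m.+1).
Proof.
elim: m s => [|m IHm] s.
  elim: s => [|s IHs]; first by rewrite /= bin0 bin1.
  rewrite BSS B0s bin0 bin1; rewrite bin0 bin1 in IHs; lia.
elim: s => [|s IHs].
  rewrite BS0 add0n.
  have -> : m.+1 + m.+1 + 0 + 1 = (m.+1 + m.+1 + 0 + 1 - m.+1) + m.+1 by lia.
  rewrite -[in RHS](@bin_sub _ m.+2); last by lia.
  congr 'C(_, _); lia.
rewrite BSS.
have H := IHm s.+2.
have E1 : m + m + s.+2 + 1 = m.+1 + m.+1 + s + 1 by lia.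
rewrite E1 in H.
have -> : m.+1 + m.+1 + s.+1 + 1 = (m.+1 + m.+1 + s + 1).+1 by lia.
move: IHs H; move: (m.+1 + m.+1 + s + 1) => K IHs H.
rewrite !binS; lia.
Qed.

Lemma B_cat n : B n 1 = catalan n.
Proof.
case: n => [|m]; first by [].
have H1 := B_closed m 1.
have H2 := mul_bin_left (m + m + 1 + 1) m.
rewrite /catalan.
have -> : m.+1.*2 = m + m + 1 + 1 by rewrite -addnn; lia.
have EKm : m + m + 1 + 1 - m = m.+2 by lia.
rewrite EKm in H2.
move: H1 H2; move: (B m.+1 1) ('C(m + m + 1 + 1, m.+1)) ('C(m + m + 1 + 1, m)) => b X Y H1 H2.
have -> : X = m.+2 * b by nia.
by rewrite mulKn.
Qed.

Definition Gc n s := if s <= n.+1 then B (n.+1 - s) s else 0.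

Lemma Gs_closed n s : 0 < s -> Gs (n.*2) s = Gc n s.
Proof.
elim: n s => [|n IH] s s0.
  by rewrite G_base /Gc; case: s s0 => [|[|s]].
case: s s0 => [//|s] _.
rewrite doubleS G_rec.
rewrite (eq_big_nat _ _ (F2 := Gc n)); last by move=> t /andP [H _]; apply: IH; lia.
have nn : n.+2 <= (n.*2).+2 by rewrite -addnn; lia.
case: (leqP (maxn s 1) n.+1) => ha.
- rewrite (@big_cat_nat _ _ _ n.+2) //=; last by lia.
  rewrite [X in _ + X]big_nat_cond [X in _ + X]big1 ?addn0; last first.
    by move=> t /andP [/andP [H1 _] _]; rewrite /Gc; case: leqP => //; lia.
  rewrite -{1}(add0n (maxn s 1)) big_addn big_mkord.
  have -> : n.+2 - maxn s 1 = (n.+1 - maxn s 1).+1 by lia.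
  rewrite (eq_bigr (fun i : 'I_(n.+1 - maxn s 1).+1 =>
             B (n.+1 - maxn s 1 - i) (maxn s 1 + i))); last first.
    move=> i _; rewrite /Gc; have Hi := ltn_ord i; case: ifP => H; last by lia.
    by congr B; lia.
  rewrite B_sum /Gc.
  case: s ha => [|s] ha.
    by rewrite /= (_ : maxn 0 1 = 1) // subn1.
  have -> : maxn s.+1 1 = s.+1 by lia.
  case: ifP => H; [by rewrite !subSS | lia].
- rewrite big_nat_cond big1; last first.
    by move=> t /andP [/andP [H1 _] _]; rewrite /Gc; case: leqP => //; lia.
  by rewrite /Gc; case: leqP => //; lia.
Qed.

Lemma NC_catalan n : Gs (n.*2) 0 = catalan n.
Proof. by rewrite G0 Gs_closed // /Gc /= subn1 /= B_cat. Qed.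

Lemma B_conv m a b : \sum_(k < m.+1) B k a * B (m - k) b = B m (a + b).
Proof.
elim: m a b => [|m IHm] a b; first by rewrite big_ord_recl big_ord0.
elim: a b => [|a IHa] b.
  rewrite big_ord_recl big1 ?addn0; last by move=> k _; rewrite lift0 BS0.
  by rewrite B0s mul1n subn0 add0n.
rewrite big_ord_recl B0s mul1n.
under eq_bigr => k _ do rewrite lift0 BSS mulnDl subSS.
rewrite big_split addnA.
have := IHa b; rewrite big_ord_recl B0s mul1n subn0.
rewrite (eq_bigr (fun i : 'I_m.+1 => B i.+1 a * B (m - i) b)); last by move=> i _; rewrite lift0 subSS.
move=> ->; rewrite IHm addSnnS BSS addnS.
have -> : (a + b).+2 = (a.+2 + b) by lia.
by [].
Qed.

Lemma cat_conv p : \sum_(k < p.+1) catalan k * catalan (p - k) = catalan p.+1.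
Proof.
rewrite -B_cat BSS BS0 add0n -(B_conv p 1 1); apply: eq_bigr => k _; by rewrite !B_cat.
Qed.

Lemma cat_mul n : n.+1 * catalan n = 'C(n.*2, n).
Proof.
case: n => [|m]; first by [].
have H1 := B_closed m 1.
have H2 := mul_bin_left (m + m + 1 + 1) m.
rewrite -B_cat.
have -> : m.+1.*2 = m + m + 1 + 1 by rewrite -addnn; lia.
have EKm : m + m + 1 + 1 - m = m.+2 by lia.
rewrite EKm in H2.
move: H1 H2; move: (B m.+1 1) ('C(m + m + 1 + 1, m.+1)) ('C(m + m + 1 + 1, m)) => b X Y H1 H2.
nia.
Qed.

Lemma cat_rec p : p.+2 * catalan p.+1 = (p.*2.+1).*2 * catalan p.
Proof.
have HX := cat_mul p.+1.
have HY := cat_mul p.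
have H1 := mul_bin_diag (p.*2.+2) p.
have H2 := mul_bin_diag (p.*2.+1) p.
have H4 := @bin_sub (p.*2.+1) p.
rewrite (_ : p.*2.+1 - p = p.+1) in H4; last by rewrite -addnn; lia.
have {}H4 := H4 (ltac:(rewrite -addnn; lia)).
rewrite doubleS in HX.
rewrite /= in H1 H2.
move: HX HY H1 H2 H4.
move: ('C(p.*2.+2, p.+1)) ('C(p.*2, p)) ('C(p.*2.+1, p)) ('C(p.*2.+1, p.+1)) => X Y Z W.
move: (catalan p.+1) (catalan p) => c1 c0.
rewrite -!addnn => HX HY H1 H2 H4.
apply/eqP; rewrite -(eqn_pmul2l (ltn0Sn p)); apply/eqP.
nia.
Qed.

Lemma mu_S n : mu_card m1212 n.+1 + catalan n.+1 = n.*2.+1 * catalan n.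
Proof.
have := mu_rec n; have := NC_catalan n.+1; rewrite doubleS => ->.
by rewrite NC_catalan.
Qed.

Lemma sum_odd_cat m :
  \sum_(k < m.+1) k.*2.+1 * catalan k * catalan (m - k) = m.+1 * catalan m.+1.
Proof.
set S := \sum_(k < m.+1) _.
have E : S = \sum_(k < m.+1) (m - k).*2.+1 * catalan k * catalan (m - k).
  rewrite /S (reindex_inj rev_ord_inj) /=; apply: eq_bigr => i _.
  have Hi := ltn_ord i.
  have -> : m.+1 - i.+1 = m - i by lia.
  have -> : m - (m - i) = i by lia.
  by rewrite mulnAC.
have : S + S = m.+1.*2 * catalan m.+1.
  rewrite {2}E -big_split /= -cat_conv big_distrr /=; apply: eq_bigr => i _.
  have Hi := ltn_ord i.
  rewrite -!mulnA -mulnDl; congr (_ * _); rewrite -!addnn; lia.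
rewrite -!addnn; lia.
Qed.

Lemma mu_closed m : mu_card m1212 m.+2 = 'C(m.+2.*2.-1, m.+2 - 2).
Proof.
have H1 := mu_S m.+1.
have H2 := B_closed m 2.
have := B_cat m.+2; rewrite BSS BS0 add0n => H3.
have H4 := cat_mul m.+1.
have H5 := mul_bin_diag (m.*2.+3) m.+1.
have Hle : m.+1 <= m.*2.+3 by rewrite -addnn; lia.
have H6 := @bin_sub (m.*2.+3) m.+1 Hle.
rewrite (_ : m.*2.+3 - m.+1 = m.+2) in H6; last by rewrite -addnn; lia.
rewrite (_ : m.+2.*2.-1 = m.*2.+3) //; rewrite (_ : m.+2 - 2 = m); last by lia.
rewrite /= in H5.
rewrite H3 in H2.
rewrite (_ : m + m + 2 + 1 = m.*2.+3) in H2; last by rewrite -addnn; lia.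
rewrite doubleS in H4.
rewrite (_ : m.+1.*2.+1 = m.*2.+3) in H1; last by rewrite doubleS.
move: H1 H2 H4 H5 H6.
move: (mu_card m1212 m.+2) (catalan m.+2) (catalan m.+1) ('C(m.*2.+3, m)) ('C(m.*2.+3, m.+1))
  ('C(m.*2.+2, m.+1)) ('C(m.*2.+3, m.+2)) => u c2 c1 X Y Z W.
rewrite -!addnn => H1 H2 H4 H5 H6.
have : m.+2 * (u + c2) = m.+2 * (X + c2) by nia.
move/eqP; rewrite eqn_pmul2l // => /eqP; lia.
Qed.

Lemma sum_odd_cat_rev m :
  \sum_(k < m.+1) (m - k).*2.+1 * catalan k * catalan (m - k) = m.+1 * catalan m.+1.
Proof.
rewrite -sum_odd_cat (reindex_inj rev_ord_inj) /=; apply: eq_bigr => i _.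
have Hi := ltn_ord i.
have -> : m.+1 - i.+1 = m - i by lia.
have -> : m - (m - i) = i by lia.
by rewrite mulnAC.
Qed.

Lemma T_eq m : \sum_(k < m.+1) catalan k * mu_card m1212 (m - k).+1 + catalan m.+2
   = m.+2 * catalan m.+1.
Proof.
set T := \sum_(k < m.+1) _.
have HT : T + \sum_(k < m.+1) catalan k * catalan (m - k).+1 = m.+1 * catalan m.+1.
  rewrite /T -big_split -sum_odd_cat_rev; apply: eq_bigr => k _ /=.
  by rewrite -mulnDr mu_S mulnCA mulnA.
have HC : \sum_(k < m.+1) catalan k * catalan (m - k).+1 + catalan m.+1 = catalan m.+2.
  rewrite -[catalan m.+2]cat_conv [RHS]big_ord_recr /= subnn (_ : catalan 0 = 1) // muln1; congr (_ + _).
  apply: eq_bigr => k _; have Hk := ltn_ord k; by rewrite (_ : m.+1 - k = (m - k).+1) //; lia.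
nia.
Qed.

Lemma part_i n : 2 <= n -> mu_card m1212 n =
  \sum_(k < n.-1) ((k.*2.+1 * catalan k * catalan (n - k - 2)
          + catalan k * mu_card m1212 (n - k - 1)))%N.
Proof.
case: n => [|[|m]] // _.
have E : mu_card m1212 m.+2 = m.+1 * catalan m.+1 +
   \sum_(k < m.+1) catalan k * mu_card m1212 (m - k).+1.
  have := mu_S m.+1; have := T_eq m; rewrite -addnn; nia.
rewrite E big_split; congr (_ + _).
  rewrite -sum_odd_cat; apply: eq_bigr => k _; have Hk := ltn_ord k.
  by rewrite (_ : m.+2 - k - 2 = m - k) //; lia.
apply: eq_bigr => k _; have Hk := ltn_ord k.
by rewrite (_ : m.+2 - k - 1 = (m - k).+1) //; lia.
Qed.

Lemma part_ii_nat m : mu_card m1212 m.+2 = 3 * mu_card m1212 m.+1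
   + \sum_(i < m.+1) catalan i.+1 * mu_card m1212 (m - i) + catalan m.+1.
Proof.
have HT := T_eq m.
have HR' : forall f : nat -> nat, f 0 = 0 ->
    \sum_(i < m.+1) catalan i.+1 * f (m - i) + f m.+1
   = \sum_(k < m.+1) catalan k * f (m - k).+1.
  move=> f f0.
  rewrite big_ord_recr big_ord_recl /= subnn f0 muln0 addn0 (_ : catalan 0 = 1) // mul1n subn0 addnC.
  congr (_ + _); apply: eq_bigr => i _; have Hi := ltn_ord i.
  by rewrite (_ : (m - i.+1).+1 = m - i) //; lia.
have HR := HR' (mu_card m1212) erefl.
have H1 := mu_S m.+1.
have H2 := mu_S m.
have H3 := cat_rec m.
rewrite -!addnn in H1 H2 H3.
nia.
Qed.

Section FPS.
Import GRing.Theory Num.Theory.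
Local Open Scope ring_scope.

Definition Tp (a : fps) (n : nat) : {poly rat} := \poly_(i < n.+1) a i.

Lemma fps_mulP a b n N : (n <= N)%N -> fps_mul a b n = (Tp a N * Tp b N)`_n.
Proof.
move=> nN; rewrite coefM; apply: eq_bigr => i _; have Hi := ltn_ord i.
by rewrite !coef_poly ifT ?ifT //; lia.
Qed.

Lemma coefM_agree (p q r : {poly rat}) n :
  (forall i, (i <= n)%N -> p`_i = q`_i) -> (p * r)`_n = (q * r)`_n.
Proof.
move=> H; rewrite !coefM; apply: eq_bigr => i _; have Hi := ltn_ord i.
by rewrite H //; lia.
Qed.

Lemma fps_mulC a b n : fps_mul a b n = fps_mul b a n.
Proof. by rewrite !(fps_mulP _ _ (leqnn n)) mulrC. Qed.

Lemma fps_mulA a b c n : fps_mul (fps_mul a b) c n = fps_mul a (fps_mul b c) n.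
Proof.
rewrite !(fps_mulP _ _ (leqnn n)).
rewrite (@coefM_agree _ (Tp a n * Tp b n)); last first.
  by move=> i Hi; rewrite coef_poly ifT ?(fps_mulP _ _ Hi) //; lia.
rewrite [in RHS]mulrC.
rewrite [RHS](@coefM_agree _ (Tp b n * Tp c n)); last first.
  by move=> i Hi; rewrite coef_poly ifT ?(fps_mulP _ _ Hi) //; lia.
by rewrite [Tp b n * Tp c n * Tp a n]mulrC mulrA.
Qed.

Lemma eq_fps_mul a b c d n : (forall i, a i = c i) -> (forall i, b i = d i) ->
  fps_mul a b n = fps_mul c d n.
Proof. by move=> H1 H2; apply: eq_bigr => i _; rewrite H1 H2. Qed.

Definition delta : fps := fun n => (n == 0)%:R.

Lemma fps_mul_delta a n : fps_mul a delta n = a n.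
Proof.
rewrite /fps_mul big_ord_recr /= subnn /delta eqxx mulr1 big1 ?add0r //.
move=> i _; have Hi := ltn_ord i; rewrite (_ : (n - i == 0)%N = false) ?mulr0 //.
by apply/negbTE; lia.
Qed.

Lemma fps_mul_X a n : fps_mul fps_X a n = if n is n'.+1 then a n' else 0.
Proof.
case: n => [|n]; first by rewrite /fps_mul big_ord_recl big_ord0 /fps_X /= mul0r addr0.
rewrite /fps_mul big_ord_recl /fps_X /= mul0r add0r big_ord_recl /=.
rewrite big1 ?addr0 ?mul1r; last by move=> i _; rewrite mul0r.
by rewrite /bump /= add1n subSS subn0.
Qed.

Lemma size_inv_list a n : size (fps_inv_list a n) = n.+1.
Proof. by elim: n => [|n IH] //=; rewrite size_rcons IH. Qed.

Lemma nth_inv_list a n k : (k <= n)%N -> nth 0 (fps_inv_list a n) k = fps_inv a k.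
Proof.
elim: n k => [|n IH] k kn; first by case: k kn.
case: (ltnP k n.+1) => kn'.
  by rewrite /= nth_rcons size_inv_list kn' IH.
by have -> : k = n.+1 by lia.
Qed.

Lemma fps_invS a n : fps_inv a n.+1 =
  - (a 0%N)^-1 * \sum_(i < n.+1) a i.+1 * fps_inv a (n - i)%N.
Proof.
rewrite {1}/fps_inv /= nth_rcons size_inv_list ltnn eqxx.
congr (_ * _); apply: eq_bigr => i _; rewrite nth_inv_list //; lia.
Qed.

Lemma inv_spec a n : a 0%N != 0 -> fps_mul a (fps_inv a) n = delta n.
Proof.
move=> a0; case: n => [|n].
  by rewrite /fps_mul big_ord_recl big_ord0 addr0 /fps_inv /= mulfV.
rewrite /fps_mul big_ord_recl /= subn0 fps_invS mulrA mulrN mulfV // mulN1r.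
rewrite /delta /= addrC.
under eq_bigr => i _ do rewrite /bump /= add1n subSS.
by rewrite subrr.
Qed.

Lemma fps_unique u v d : d 0%N != 0 -> (forall k, fps_mul u d k = fps_mul v d k) ->
  forall k, u k = v k.
Proof.
move=> d0 H k; elim/ltn_ind: k => k IH.
have := H k; rewrite /fps_mul !big_ord_recr /= subnn.
rewrite (eq_bigr (fun i : 'I_k => v i * d (k - i)%N)); last first.
  by move=> i _; rewrite IH.
by move/addrI/(mulIf d0).
Qed.

Definition XC : fps := fps_mul fps_X catalan_gf.
Definition Aser : fps := fps_sub (fps_const 1) (fps_scale 2%:R XC).
Definition Bser : fps := fps_sub (fps_const 1) XC.
Definition Dser : fps := fps_mul Aser Bser.
Definition Pser : fps := fps_mul fps_X (fps_sub catalan_gf (fps_const 1)).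

Notation c k := ((catalan k)%:R : rat).

Lemma XCE k : XC k = if k is k'.+1 then c k' else 0.
Proof. by rewrite /XC fps_mul_X; case: k. Qed.

Lemma A0 : Aser 0%N = 1. Proof. by rewrite /Aser /fps_sub /fps_scale XCE /= mulr0 subr0. Qed.
Lemma AS k : Aser k.+1 = - 2%:R * c k.
Proof. by rewrite /Aser /fps_sub /fps_scale XCE /= sub0r mulNr. Qed.
Lemma B0 : Bser 0%N = 1. Proof. by rewrite /Bser /fps_sub XCE /= subr0. Qed.
Lemma BS k : Bser k.+1 = - c k.
Proof. by rewrite /Bser /fps_sub XCE /= sub0r. Qed.

Lemma D0 : Dser 0%N = 1.
Proof. by rewrite /Dser /fps_mul big_ord_recl big_ord0 addr0 A0 B0 mulr1. Qed.

Lemma DS k : Dser k.+1 = - 3%:R * c k + 2%:R * \sum_(i < k) c i * c (k.-1 - i)%N.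
Proof.
rewrite /Dser /fps_mul big_ord_recl A0 mul1r subn0 BS.
rewrite big_ord_recr /= subnn B0 mulr1 AS.
under eq_bigr => i _ do rewrite /bump /= add1n subSS AS.
rewrite (eq_bigr (fun i : 'I_k => 2%:R * (c i * c (k.-1 - i)%N))); last first.
  move=> i _; have Hi := ltn_ord i.
  rewrite (_ : (k - i = (k.-1 - i).+1)%N); last by lia.
  by rewrite BS; ring.
rewrite -big_distrr /=.
set S := \sum_(i < k) _.
lra.
Qed.

Lemma D1 : Dser 1%N = - 3%:R.
Proof. by rewrite DS big_ord0 mulr0 addr0 (_ : catalan 0 = 1%N) // mulr1. Qed.

Lemma DSS k : Dser k.+2 = - c k.+1.
Proof.
rewrite DS /=.
rewrite (eq_bigr (fun i : 'I_k.+1 => ((catalan i * catalan (k - i))%N)%:R)); last first.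
  by move=> i _; rewrite natrM.
rewrite -natr_sum cat_conv.
set x := c k.+1; lra.
Qed.

Lemma mu1 : mu_card m1212 1 = 0%N.
Proof. have := mu_S 0; rewrite (_ : catalan 1 = 1%N) // (_ : catalan 0 = 1%N) //; lia. Qed.

Lemma L7 n : fps_mul (mu_gf m1212) Dser n = Pser n.
Proof.
rewrite fps_mulC /Pser fps_mul_X /mu_gf.
case: n => [|[|m]].
- by rewrite /fps_mul big_ord_recl big_ord0 addr0 /= mulr0.
- rewrite /fps_mul big_ord_recl big_ord_recl big_ord0 addr0 subn0 lift0 subnn mu1 D0 D1.
  rewrite (_ : mu_card m1212 0 = 0%N) // /fps_sub /fps_const /catalan_gf /=.
- have H := part_ii_nat m.
  move: H; move: (mu_card m1212) => f H.
  have Hr : (f m.+2)%:R = 3%:R * (f m.+1)%:R + \sum_(i < m.+1) c i.+1 * (f (m - i)%N)%:R + c m.+1 :> rat.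
    rewrite H natrD natrD natrM natr_sum; congr (_ + _ + _); apply: eq_bigr => i _; by rewrite natrM.
  rewrite /fps_mul big_ord_recl big_ord_recl !lift0 subn0 subSS D0.
  rewrite (_ : Dser (nat_of_ord (@ord0 m.+1)).+1 = - 3%:R); last by rewrite D1.
  under eq_bigr => i _ do rewrite !lift0 !subSS DSS.
  rewrite /fps_sub /fps_const /catalan_gf subr0.
  set S := \sum_(i < m.+1) _.
  rewrite (_ : (m.+1 - ord0)%N = m.+1) //.
  have -> : S = - \sum_(i < m.+1) c i.+1 * (f (m - i)%N)%:R.
    by rewrite /S -sumrN; apply: eq_bigr => i _; rewrite mulNr.
  lra.
Qed.

Lemma part_ii m : mu_gf m1212 m = fps_mul Pser (fps_inv Dser) m.
Proof.
move: m; apply: (@fps_unique _ _ Dser); first by rewrite D0 oner_neq0.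
move=> k; rewrite L7 fps_mulA.
rewrite (@eq_fps_mul _ _ Pser delta); first by rewrite fps_mul_delta.
  by [].
by move=> i; rewrite fps_mulC inv_spec // D0 oner_neq0.
Qed.

End FPS.

Theorem proposition3 (n : nat) (hn : (2 <= n)%N) :
  (mu_card m1212 n =
     \sum_(k < n.-1)
        ((k.*2.+1 * catalan k * catalan (n - k - 2)
          + catalan k * mu_card m1212 (n - k - 1)))%N)%N
  /\ (forall m : nat,
        mu_gf m1212 m =
        fps_mul
          (fps_mul fps_X (fps_sub catalan_gf (fps_const 1)))
          (fps_inv (fps_mul
                      (fps_sub (fps_const 1)
                               (fps_scale 2%:R (fps_mul fps_X catalan_gf)))
                      (fps_sub (fps_const 1) (fps_mul fps_X catalan_gf))))
          m)
  /\ mu_card m1212 n = 'C(n.*2.-1, n - 2).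
Proof.
split; first exact: part_i.
split; first exact: part_ii.
case: n hn => [|[|m]] // _; exact: mu_closed.
Qed.
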